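(* Let $p\in(0,1/2)$, let $n\ge k\ge 1$ be integers and let $\delta\in(0,1)$. Consider any variable-length algorithm for computing $\mathsf{TH}_k(\mathbf{x})$ from noisy queries whose number of queries $M$ satisfies \[ \mathbb{E}[M\mid\mathbf{x}]\le\frac{(n-k+1)\log\frac{1}{4\delta}}{D_{\mathsf{KL}}(p\|1-p)} \] for every input instance $\mathbf{x}\in\{0,1\}^n$. Then the worst-case error probability of the algorithm, $\max_{\mathbf{x}\in\{0,1\}^n}\mathbb{P}(\widehat{\mathsf{TH}}_k\neq\mathsf{TH}_k(\mathbf{x})\mid\mathbf{x})$, is at least $\delta$.
   Context: For $\mathbf{x}=(x_1,\dots,x_n)\in\{0,1\}^n$, $\mathsf{TH}_k(\mathbf{x})=1$ if $\sum_i x_i\ge k$ and $0$ otherwise. Noisy query model: at each time step the algorithm chooses an index $i\in[n]$ (possibly depending on all previous responses) and observes $x_i\oplus Z$, where $Z\sim\mathsf{Bern}(p)$ is independent of everything else; $p$ is known. A variable-length algorithm may stop adaptively (so $M$ is random) and then outputs an estimate $\widehat{\mathsf{TH}}_k\in\{0,1\}$. $D_{\mathsf{KL}}(p\|1-p)=(1-2p)\log\frac{1-p}{p}$; $\log$ is the natural logarithm. *)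

(* Defs.v *)
From HB Require Import structures.
From mathcomp Require Import all_boot all_order all_algebra.
From mathcomp Require Import all_classical all_reals all_analysis.
Set Implicit Arguments. Unset Strict Implicit. Unset Printing Implicit Defensive.
Import Order.TTheory GRing.Theory Num.Theory.
Local Open Scope ring_scope.

Section NoisyQuery.
Variable R : realType.
Variable n : nat.

Definition input := {ffun 'I_n -> bool}.

Definition TH (k : nat) (x : input) : bool := (k <= \sum_(i < n) x i)%N.

(* one observation: queried index and the noisy answer x_i xor Z *)
Definition obs := ('I_n * bool)%type.

(* an action: inl b = stop and output b ; inr i = query index i *)
Definition action := (bool + 'I_n)%type.

(* a (possibly randomized) adaptive variable-length algorithm: given the
   history of (query, response) pairs, a probability distribution over
   the next action.  Deterministic algorithms are the 0/1-valued case. *)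
Definition policy := seq obs -> {ffun action -> R}.

Definition valid_policy (A : policy) : Prop :=
  forall h, (forall a, 0 <= A h a) /\ \sum_(a : action) A h a = 1.

(* probability of response o.2 when querying o.1 on input x: x_i xor Z,
   Z ~ Bern(p) *)
Definition chan (p : R) (x : input) (o : obs) : R :=
  if o.2 == x o.1 then 1 - p else p.

(* probability that the run of A on x produces (as its first |h| steps)
   exactly the history h *)
Fixpoint reach_aux (p : R) (A : policy) (x : input) (pre h : seq obs) : R :=
  match h with
  | [::] => 1
  | o :: h' => A pre (inr o.1) * chan p x o * reach_aux p A x (rcons pre o) h'
  end.

Definition reach p A x (h : seq obs) : R := reach_aux p A x [::] h.

(* P(M = m and output = b | x) *)
Definition P_stop_out p A x (m : nat) (b : bool) : R :=
  \sum_(t : m.-tuple obs) reach p A x t * A t (inl b).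

Definition P_stop p A x (m : nat) : R :=
  P_stop_out p A x m false + P_stop_out p A x m true.

Definition P_term p A x : \bar R := (\sum_(0 <= m <oo) (P_stop p A x m)%:E)%E.

(* E[M | x]  (= +oo when the algorithm fails to stop with positive prob.) *)
Definition expected_queries p A x : \bar R :=
  if (P_term p A x < 1%E)%E then +oo%E
  else (\sum_(0 <= m <oo) ((m%:R * P_stop p A x m)%:E))%E.

Definition Perr p A (k : nat) x : \bar R :=
  (\sum_(0 <= m <oo) (P_stop_out p A x m (~~ TH k x))%:E)%E.

End NoisyQuery.

(* D_KL(p || 1-p) = (1-2p) log((1-p)/p) *)
Definition DKL {R : realType} (p : R) : R := (1 - 2 * p) * ln ((1 - p) / p).

(* Main.v *)
Require Import Defs.
From HB Require Import structures.
From mathcomp Require Import all_boot all_order all_algebra.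
From mathcomp Require Import all_classical all_reals all_analysis.
From mathcomp Require Import ring lra zify.
Import Order.TTheory GRing.Theory Num.Theory.
Set Implicit Arguments. Unset Strict Implicit.
Local Open Scope ring_scope.

Lemma sum_tuple_cons (R : realType) (T : finType) N (F : seq T -> R) :
  \sum_(t : N.+1.-tuple T) F t = \sum_(o : T) \sum_(t : N.-tuple T) F (o :: t).
Proof.
rewrite pair_bigA /=.
rewrite (reindex (fun ot : T * N.-tuple T => [tuple of ot.1 :: ot.2])) //=.
exists (fun t : N.+1.-tuple T => (thead t, [tuple of behead t])).
  by move=> [a b] _ /=; congr pair; apply: val_inj.
by move=> t _; rewrite [RHS]tuple_eta.
Qed.

Lemma sum_tuple0 (R : realType) (T : finType) (F : seq T -> R) :
  \sum_(t : 0.-tuple T) F t = F [::].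
Proof.
rewrite (eq_bigr (fun _ => F [::])); last by move=> t _; rewrite tuple0.
by rewrite sumr_const card_tuple expn0.
Qed.

Lemma sum_tuple_rcons (R : realType) (T : finType) N (F : seq T -> R) :
  \sum_(t : N.+1.-tuple T) F t = \sum_(t : N.-tuple T) \sum_(o : T) F (rcons t o).
Proof.
elim: N F => [|N IH] F.
  rewrite sum_tuple_cons (@sum_tuple0 R T (fun s => \sum_(o : T) F (rcons s o))).
  by apply: eq_bigr => o _; rewrite (@sum_tuple0 R T (fun s => F (o :: s))).
rewrite sum_tuple_cons.
rewrite (eq_bigr (fun o => \sum_(t : N.-tuple T) \sum_(o' : T) F (o :: rcons t o'))); last first.
  by move=> o _; rewrite (IH (fun s => F (o :: s))).
by rewrite (@sum_tuple_cons R T N (fun s => \sum_(o : T) F (rcons s o))).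
Qed.

Section Basic.
Variable R : realType.
Variable n : nat.
Variable p : R.
Variable A : policy R n.
Hypothesis hp0 : 0 < p.
Hypothesis hp1 : p < 1.
Hypothesis hA : valid_policy A.

Definition stopw (t : seq (obs n)) := A t (inl false) + A t (inl true).
Definition contw (t : seq (obs n)) := \sum_(j : 'I_n) A t (inr j).
Definition Rm (x : input n) m := \sum_(t : m.-tuple (obs n)) reach p A x t.

Lemma A_ge0 (t : seq (obs n)) (a : action n): 0 <= A t a.
Proof. by case: (hA t) => H _; apply: H. Qed.

Lemma valid_split (t : seq (obs n)): stopw t + contw t = 1.
Proof.
case: (hA t) => _ <-.
rewrite big_sumType /= big_bool /stopw /contw addrC /=.
rewrite [LHS]addrC; congr (_ + _); exact: addrC.
Qed.

Lemma chan_ge0 (x : input n) (o : obs n): 0 <= chan p x o.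
Proof. rewrite /chan; case: ifP => _; last exact: ltW. by rewrite subr_ge0 ltW. Qed.

Lemma chan_sum (x : input n) (j : 'I_n): \sum_(b : bool) chan p x (j, b) = 1.
Proof. by rewrite big_bool /chan /=; case: (x j) => /=; rewrite ?subrK ?addrNK // addrC subrK. Qed.

Lemma reach_aux_ge0 (x : input n) (pre : seq (obs n)) (t : seq (obs n)): 0 <= reach_aux p A x pre t.
Proof.
elim: t pre => [|o t IH] pre /=; first exact: ler01.
by rewrite !mulr_ge0 ?A_ge0 ?chan_ge0.
Qed.

Lemma reach_ge0 (x : input n) (t : seq (obs n)): 0 <= reach p A x t.
Proof. exact: reach_aux_ge0. Qed.

Lemma reach_aux_rcons (x : input n) (pre : seq (obs n)) (t : seq (obs n)) (o : obs n):
  reach_aux p A x pre (rcons t o) = reach_aux p A x pre t * A (pre ++ t) (inr o.1) * chan p x o.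
Proof.
elim: t pre => [|o' t IH] pre /=; first by rewrite cats0 !mulr1 mul1r.
by rewrite IH cat_rcons !mulrA.
Qed.

Lemma reach_rcons (x : input n) (t : seq (obs n)) (o : obs n):
  reach p A x (rcons t o) = reach p A x t * A t (inr o.1) * chan p x o.
Proof. exact: reach_aux_rcons. Qed.

Lemma obs_sum (x : input n) (t : seq (obs n)) (G: obs n -> R) :
  \sum_(o : obs n) A t (inr o.1) * chan p x o * G o =
  \sum_(j : 'I_n) A t (inr j) * \sum_(b : bool) chan p x (j, b) * G (j, b).
Proof.
transitivity (\sum_(j : 'I_n) \sum_(b : bool) A t (inr j) * chan p x (j, b) * G (j, b)).
  by rewrite pair_bigA; apply: eq_bigr => -[j b].
by apply: eq_bigr => j _; rewrite mulr_sumr; apply: eq_bigr => b _; rewrite mulrA.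
Qed.

Lemma step (x : input n) N (G: seq (obs n) -> R) :
  \sum_(t : N.+1.-tuple (obs n)) reach p A x t * G t =
  \sum_(t : N.-tuple (obs n)) reach p A x t *
     \sum_(o : obs n) A t (inr o.1) * chan p x o * G (rcons t o).
Proof.
rewrite (@sum_tuple_rcons R _ N (fun s => reach p A x s * G s)).
apply: eq_bigr => t _; rewrite mulr_sumr; apply: eq_bigr => o _.
by rewrite reach_rcons !mulrA.
Qed.

Lemma Rstep (x : input n) N: Rm x N.+1 = \sum_(t : N.-tuple (obs n)) reach p A x t * contw t.
Proof.
rewrite /Rm (eq_bigr (fun t : N.+1.-tuple (obs n) => reach p A x t * 1)); last by move=> *; rewrite mulr1.
rewrite (step x N (fun _ => 1)); apply: eq_bigr => t _; congr (_ * _).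
rewrite obs_sum /contw; apply: eq_bigr => j _.
by rewrite (eq_bigr (fun b => chan p x (j, b))) ?chan_sum ?mulr1 // => b _; rewrite mulr1.
Qed.

Lemma Pstop_eq (x : input n) m: P_stop p A x m = \sum_(t : m.-tuple (obs n)) reach p A x t * stopw t.
Proof. by rewrite /P_stop /P_stop_out -big_split /=; apply: eq_bigr => t _; rewrite mulrDr. Qed.

Lemma Rm0 (x : input n): Rm x 0 = 1.
Proof. by rewrite /Rm (@sum_tuple0 R _ (fun s => reach p A x s)). Qed.

Lemma mass (x : input n) N: \sum_(m < N) P_stop p A x m + Rm x N = 1.
Proof.
elim: N => [|N IH]; first by rewrite big_ord0 add0r Rm0.
rewrite big_ord_recr /= Rstep Pstop_eq -addrA -big_split /=.
rewrite (eq_bigr (fun t : N.-tuple (obs n) => reach p A x t)) ?IH //.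
by move=> t _; rewrite -mulrDr valid_split mulr1.
Qed.

Lemma Rm_rec (x : input n) m: Rm x m.+1 = Rm x m - P_stop p A x m.
Proof.
have h1 := mass x m.+1; have h2 := mass x m; rewrite big_ord_recr /= in h1; lra.
Qed.

Lemma Pstop_ge0 (x : input n) m: 0 <= P_stop p A x m.
Proof. rewrite Pstop_eq; apply: sumr_ge0 => t _; by rewrite mulr_ge0 ?reach_ge0 ?addr_ge0 ?A_ge0. Qed.

Lemma Pso_ge0 (x : input n) m b: 0 <= P_stop_out p A x m b.
Proof. apply: sumr_ge0 => t _; by rewrite mulr_ge0 ?reach_ge0 ?A_ge0. Qed.

Lemma Rm_ge0 (x : input n) m: 0 <= Rm x m.
Proof. apply: sumr_ge0 => t _; exact: reach_ge0. Qed.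

End Basic.

Section Count.
Variable R : realType.
Variable n : nat.
Variable p : R.
Variable A : policy R n.
Hypothesis hp0 : 0 < p.
Hypothesis hp1 : p < 1.
Hypothesis hA : valid_policy A.
Variable x : input n.

Definition Nj (j : 'I_n) N :=
  \sum_(m < N) \sum_(t : m.-tuple (obs n)) reach p A x t * A t (inr j).

Lemma sumNj N : \sum_(j : 'I_n) Nj j N = \sum_(m < N) Rm p A x m.+1.
Proof.
rewrite /Nj exchange_big; apply: eq_bigr => m _.
rewrite exchange_big Rstep //; apply: eq_bigr => t _.
by rewrite /contw mulr_sumr.
Qed.

Lemma Nj_ge0 j N : 0 <= Nj j N.
Proof.
apply: sumr_ge0 => m _; apply: sumr_ge0 => t _.
by rewrite mulr_ge0 ?reach_ge0 ?A_ge0.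
Qed.

Lemma T_eq N : \sum_(m < N) Rm p A x m.+1 =
  \sum_(m < N) m%:R * P_stop p A x m + N%:R * Rm p A x N.
Proof.
elim: N => [|N IH]; first by rewrite !big_ord0 mul0r addr0.
rewrite !big_ord_recr /= IH (Rm_rec p hA x N) -natr1.
have := Rm_rec p hA x N; lra.
Qed.

Lemma T_le N K : (N <= K)%N -> \sum_(m < N) Rm p A x m.+1 <=
  \sum_(m < K) m%:R * P_stop p A x m + N%:R * Rm p A x K.
Proof.
elim: K => [|K IH].
  by rewrite leqn0 => /eqP ->; rewrite T_eq.
rewrite leq_eqVlt => /orP [/eqP hN|]; first by subst N; rewrite T_eq.
rewrite ltnS => hNK0; have {}IH := IH hNK0.
rewrite big_ord_recr /= (Rm_rec p hA x K).
have hP := Pstop_ge0 hp0 hp1 hA x K.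
have hNK : (N%:R : R) <= K%:R by rewrite ler_nat.
apply: (le_trans IH). 
suff : 0 <= (K%:R - N%:R) * P_stop p A x K by lra.
by rewrite mulr_ge0 // subr_ge0.
Qed.

Lemma Rm_decr m m' : (m <= m')%N -> Rm p A x m' <= Rm p A x m.
Proof.
elim: m' => [|m' IH]; first by rewrite leqn0 => /eqP ->.
rewrite leq_eqVlt => /orP [/eqP ->|]; first by [].
rewrite ltnS => /IH; rewrite (Rm_rec p hA x m').
have := Pstop_ge0 hp0 hp1 hA x m'; lra.
Qed.

End Count.

Lemma am_gm (R : realType) (c1 c2 s a : R) : 0 <= c1 -> 0 <= c2 -> 0 < a ->
  2 * ((c1 + c2) * s) <= a * (c1 + c2 * s ^+ 2) + ((c1 + c2) + (c1 + c2) * s ^+ 2) / a.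
Proof.
move=> h1 h2 ha.
rewrite -subr_ge0.
have -> : a * (c1 + c2 * s ^+ 2) + ((c1 + c2) + (c1 + c2) * s ^+ 2) / a - 2 * ((c1 + c2) * s)
  = (c1 * (a - s) ^+ 2 + c2 * (a * s - 1) ^+ 2 + c2 * s ^+ 2 + c1) / a.
  by field; rewrite gt_eqF.
apply: divr_ge0; last exact: ltW.
by rewrite !addr_ge0 // mulr_ge0 // ?sqr_ge0.
Qed.

Lemma sum_lin (R : realType) (I : finType) (a : R) (u v w z : I -> R) :
  \sum_(i : I) (a * (u i + v i) + (w i + z i) / a) =
  a * (\sum_i u i + \sum_i v i) + (\sum_i w i + \sum_i z i) / a.
Proof. by rewrite big_split /= -mulr_sumr -mulr_suml !big_split. Qed.

Section Flip.
Variable R : realType.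
Variable n : nat.
Variable p : R.
Variable A : policy R n.
Hypothesis hp0 : 0 < p.
Hypothesis hp1 : p < 1.
Hypothesis hA : valid_policy A.
Variables (x y : input n) (i : 'I_n).
Hypothesis hyi : y i = ~~ x i.
Hypothesis hyj : forall j, j != i -> y j = x j.

Definition LL := ln ((1 - p) / p).
Definition ell (o : obs n) : R :=
  if o.1 == i then (if o.2 == x i then LL else - LL) else 0.
Definition Zs (t : seq (obs n)) := \sum_(o <- t) ell o.

Lemma rho_pos : 0 < (1 - p) / p.
Proof. by rewrite divr_gt0 // subr_gt0. Qed.

Lemma expLL : expR LL = (1 - p) / p.
Proof. by rewrite /LL lnK // posrE rho_pos. Qed.

Lemma chan_flip o : chan p y o = chan p x o * expR (- ell o).
Proof.
case: o => j b; rewrite /chan /ell /=.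
have hp : p != 0 by rewrite gt_eqF.
have hq : 1 - p != 0 by rewrite gt_eqF // subr_gt0.
case: (eqVneq j i) => [->|hji]; last by rewrite hyj // oppr0 expR0 mulr1.
rewrite hyi.

case: (x i); case: b => /=; rewrite ?opprK ?expRN ?expLL /=; field; by rewrite ?hp ?hq.
Qed.

Lemma reach_aux_flip pre t :
  reach_aux p A y pre t = reach_aux p A x pre t * expR (- Zs t).
Proof.
elim: t pre => [|o t IH] pre /=; first by rewrite /Zs big_nil oppr0 expR0 mulr1.
rewrite IH chan_flip /Zs big_cons opprD expRD; ring.
Qed.

Lemma reach_flip t : reach p A y t = reach p A x t * expR (- Zs t).
Proof. exact: reach_aux_flip. Qed.

Lemma Zs_rcons t o : Zs (rcons t o) = Zs t + ell o.
Proof. by rewrite /Zs big_rcons. Qed.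

Definition Phi N (G : seq (obs n) -> R) :=
  \sum_(m < N) \sum_(t : m.-tuple (obs n)) reach p A x t * stopw A t * G t +
  \sum_(t : N.-tuple (obs n)) reach p A x t * G t.

Lemma Phi1 N : Phi N (fun _ => 1) = 1.
Proof.
rewrite -[RHS](mass p hA x N) /Phi /Rm.
congr (_ + _); first by apply: eq_bigr => m _; rewrite Pstop_eq; apply: eq_bigr => t _; rewrite mulr1.
by apply: eq_bigr => t _; rewrite mulr1.
Qed.

Lemma Phi_le N G1 G2 : (forall t, G1 t <= G2 t) -> Phi N G1 <= Phi N G2.
Proof.
move=> h; apply: lerD; last first.
  by apply: ler_sum => t _; apply: ler_wpM2l => //; exact: reach_ge0.
apply: ler_sum => m _; apply: ler_sum => t _; apply: ler_wpM2l => //.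
by rewrite mulr_ge0 ?reach_ge0 ?addr_ge0 ?(A_ge0 hA).
Qed.

Lemma Phi_lin N (a b : R) G : Phi N (fun t => a + b * G t) = a * Phi N (fun _ => 1) + b * Phi N G.
Proof.
rewrite /Phi !mulrDr !mulr_sumr.
rewrite addrACA; congr (_ + _); last first.
  by rewrite -big_split; apply: eq_bigr => t _ /=; ring.
rewrite -big_split; apply: eq_bigr => m _ /=.
rewrite !mulr_sumr -big_split; apply: eq_bigr => t _ /=; ring.
Qed.

Definition Ni N := Nj p A x i N.

Lemma ell_avg (j : 'I_n) :
  \sum_(b : bool) chan p x (j, b) * ell (j, b) = if j == i then DKL p else 0.
Proof.
rewrite big_bool /chan /ell /=.
case: (eqVneq j i) => [->|hji]; last by rewrite !mulr0 addr0.
rewrite /DKL -/LL; case: (x i) => /=; ring.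
Qed.

Lemma martingale N : Phi N Zs = DKL p * Ni N.
Proof.
elim: N => [|N IH].
  by rewrite /Phi /Ni /Nj big_ord0 add0r (@sum_tuple0 R _ (fun s => reach p A x s * Zs s))
     /Zs big_nil mulr0 big_ord0 mulr0.
have -> : Phi N.+1 Zs = Phi N Zs +
   \sum_(t : N.-tuple (obs n)) reach p A x t * A t (inr i) * DKL p.
  rewrite /Phi big_ord_recr /= step -!addrA; congr (_ + _).
  rewrite -!big_split; apply: eq_bigr => t _ /=.
  rewrite obs_sum.
  have -> : \sum_(j : 'I_n) A t (inr j) * \sum_(b : bool) chan p x (j, b) * Zs (rcons t (j, b))
     = contw A t * Zs t + A t (inr i) * DKL p.
    rewrite (eq_bigr (fun j => A t (inr j) * Zs t + A t (inr j) * (if j == i then DKL p else 0))); last first.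
      move=> j _; rewrite -ell_avg -mulrDr; congr (_ * _).
      rewrite (eq_bigr (fun b => chan p x (j, b) * Zs t + chan p x (j, b) * ell (j, b))); last first.
        by move=> b _; rewrite Zs_rcons mulrDr.
      by rewrite big_split /= -mulr_suml chan_sum mul1r.
    rewrite big_split /= /contw mulr_suml; congr (_ + _).
    rewrite (bigD1 i) //= eqxx big1 ?addr0 // => j /negbTE ->; by rewrite mulr0.
  have := valid_split hA t.
  set s1 := stopw A t; set c1 := contw A t => hsc.
  have -> : c1 = 1 - s1 by lra.
  ring.
rewrite IH /Ni /Nj big_ord_recr /= mulrDr; congr (_ + _).
by rewrite mulr_sumr; apply: eq_bigr => t _; ring.
Qed.

Lemma jensen N : expR (- (DKL p * Ni N) / 2) <= Phi N (fun t => expR (- Zs t / 2)).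
Proof.
set mu := DKL p * Ni N.
set c := expR (- mu / 2).
have hle : forall t, c * (1 + mu / 2) + (- c / 2) * Zs t <= expR (- Zs t / 2).
  move=> t.
  have -> : expR (- Zs t / 2) = c * expR (- Zs t / 2 + mu / 2).
    by rewrite /c -expRD; congr expR; ring.
  have hc : 0 < c by apply: expR_gt0.
  have := expR_ge1Dx (- Zs t / 2 + mu / 2).
  move=> h; have := ler_wpM2l (ltW hc) h; lra.
apply: le_trans (Phi_le _ hle).
rewrite Phi_lin Phi1 martingale -/mu; lra.
Qed.

Lemma BH N (b0 : bool) (a : R) : 0 < a ->
  2 * Phi N (fun t => expR (- Zs t / 2)) <=
  a * (\sum_(m < N) P_stop_out p A x m (~~ b0) + \sum_(m < N) P_stop_out p A y m b0 + Rm p A x N)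
  + 2 / a.
Proof.
move=> ha.
have hsq : forall t, reach p A y t = reach p A x t * expR (- Zs t / 2) ^+ 2.
  by move=> t; rewrite reach_flip expr2 -expRD; congr (_ * expR _); field.
have hst : forall t, stopw A t = A t (inl (~~ b0)) + A t (inl b0).
  by move=> t; rewrite /stopw; case: b0 => //=; rewrite addrC.
have pt1 : forall t, 2 * (reach p A x t * stopw A t * expR (- Zs t / 2)) <=
   a * (reach p A x t * A t (inl (~~ b0)) + reach p A y t * A t (inl b0)) +
   (reach p A x t * stopw A t + reach p A y t * stopw A t) / a.
  move=> t; rewrite hsq.
  have := am_gm (expR (- Zs t / 2)) (mulr_ge0 (reach_ge0 hp0 hp1 hA x t) (A_ge0 hA t (inl (~~ b0))))
     (mulr_ge0 (reach_ge0 hp0 hp1 hA x t) (A_ge0 hA t (inl b0))) ha.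
  by rewrite hst; congr (_ <= _); [ring | congr (_ + _); [ring | congr (_ / _); ring]].
have pt2 : forall t, 2 * (reach p A x t * expR (- Zs t / 2)) <=
   a * (reach p A x t + 0) + (reach p A x t + reach p A y t) / a.
  move=> t; rewrite hsq.
  have := am_gm (expR (- Zs t / 2)) (reach_ge0 hp0 hp1 hA x t) (lexx 0) ha.
  by congr (_ <= _); [ring | congr (_ + _); [ring | congr (_ / _); ring]].
rewrite /Phi mulrDr !mulr_sumr.
apply: le_trans.
  apply: lerD; first (apply: ler_sum => m _; rewrite mulr_sumr; apply: ler_sum => t _; exact: pt1).
  apply: ler_sum => t _; exact: pt2.
rewrite (eq_bigr (fun m : 'I_N => a * (P_stop_out p A x m (~~ b0) + P_stop_out p A y m b0) +
   (P_stop p A x m + P_stop p A y m) / a)); last first.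
  by move=> m _; rewrite sum_lin !Pstop_eq.
rewrite !sum_lin big1_eq addr0.
have ex := mass p hA x N; have ey := mass p hA y N.
rewrite /Rm in ex ey *.
set X1 := \sum_(i0 < N) P_stop_out p A x i0 (~~ b0).
set Y1 := \sum_(i0 < N) P_stop_out p A y i0 b0.
set PX := \sum_(i0 < N) P_stop p A x i0 in ex ey *.
set PY := \sum_(i0 < N) P_stop p A y i0 in ex ey *.
set RX := \sum_(i : N.-tuple (obs n)) reach p A x i in ex ey *.
set RY := \sum_(i : N.-tuple (obs n)) reach p A y i in ex ey *.
have h2 : (PX + PY) / a + (RX + RY) / a = 2 / a.
  by rewrite -mulrDl; congr (_ / _); lra.
lra.
Qed.

End Flip.

Lemma partial_le_series (R : realType) (u : nat -> R) K : (forall m, 0 <= u m) ->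
  ((\sum_(m < K) u m)%:E <= \sum_(0 <= m <oo) (u m)%:E)%E.
Proof.
move=> h.
have := @nneseries_lim_ge R (fun m => (u m)%:E) xpredT 0 K (fun m _ _ => h m).
by rewrite sumEFin big_mkord.
Qed.

Lemma series_le_of_partial (R : realType) (u : nat -> R) (c : R) : (forall m, 0 <= u m) ->
  (forall K, \sum_(m < K) u m <= c) -> (\sum_(0 <= m <oo) (u m)%:E <= c%:E)%E.
Proof.
move=> h hc; apply: lime_le.
  by apply: is_cvg_nneseries => m _ _; rewrite lee_fin.
by apply: nearW => K; rewrite sumEFin big_mkord lee_fin.
Qed.

Section Main.
Variable R : realType.
Variable n : nat.
Variable p : R.
Variable A : policy R n.
Hypothesis hp0 : 0 < p.
Hypothesis hp1 : p < 1.
Hypothesis hA : valid_policy A.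
Variable B : R.
Hypothesis hE : forall x, (expected_queries p A x <= B%:E)%E.

Lemma EM_partial x K : \sum_(m < K) m%:R * P_stop p A x m <= B.
Proof.
have := hE x; rewrite /expected_queries; case: ifP => _.
  by move/le_gtF; rewrite ltey.
move=> h.
have h2 := partial_le_series K (fun m => mulr_ge0 (ler0n R m) (Pstop_ge0 hp0 hp1 hA x m)).
by rewrite -lee_fin (le_trans h2 h).
Qed.

Lemma Pterm_ge1 x : (1 <= P_term p A x)%E.
Proof.
have := hE x; rewrite /expected_queries; case: ifP => h.
  by move/le_gtF; rewrite ltey.
by move=> _; rewrite leNgt h.
Qed.

Lemma Rm_small x eps : 0 < eps -> exists K, Rm p A x K <= eps.
Proof.
move=> he; apply: contrapT => hne.
have hK : forall K, \sum_(m < K) P_stop p A x m <= 1 - eps.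
  move=> K; have hm := mass p hA x K.
  have : eps < Rm p A x K.
    by rewrite ltNge; apply/negP => hle; apply: hne; exists K.
  lra.
have := series_le_of_partial (Pstop_ge0 hp0 hp1 hA x) hK.
have := Pterm_ge1 x; rewrite /P_term => h1 h2.
have := le_trans h1 h2; rewrite lee_fin; lra.
Qed.

Lemma T_le_B x N : \sum_(m < N) Rm p A x m.+1 <= B.
Proof.
apply/ler_addgt0Pr => e he.
have hN1 : 0 < N%:R + 1 :> R by rewrite ltr_wpDl.
have [K0 hK0] := Rm_small x (divr_gt0 he hN1).
have hK := T_le hp0 hp1 hA x (leq_maxl N K0).
have hRK : Rm p A x (maxn N K0) <= e / (N%:R + 1).
  by apply: le_trans hK0; apply: Rm_decr => //; exact: leq_maxr.
have hEM := EM_partial x (maxn N K0).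
have hNe : N%:R * (e / (N%:R + 1)) = e - e / (N%:R + 1).
  by field; rewrite gt_eqF.
have hN0 : 0 <= N%:R :> R by [].
have := ler_wpM2l hN0 hRK.
have := divr_gt0 he hN1.
lra.
Qed.

End Main.
Unset Implicit Arguments. Set Strict Implicit.

Lemma sum_x0 n m : (m <= n)%N ->
  (\sum_(j < n) nat_of_bool (j < m)%N = m)%N.
Proof.
move=> hmn.
rewrite -(big_mkord xpredT (fun j => nat_of_bool (j < m)%N)).
rewrite (big_cat_nat (leq0n m) hmn) /=.
rewrite (eq_big_nat _ _ (F2 := fun=> 1%N)); last by move=> j /andP [_ ->].
rewrite (eq_big_nat _ _ (F1 := fun j => nat_of_bool (j < m)%N) (F2 := fun=> 0%N)); last first.
  by move=> j /andP [hj _]; rewrite ltnNge hj.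
by rewrite !sum_nat_const_nat muln1 muln0 addn0 subn0.
Qed.

Theorem proposition5 (R : realType) (p : R) (n k : nat) (delta : R)
  (A : policy R n) :
  0 < p < 1 / 2 ->
  (1 <= k)%N -> (k <= n)%N ->
  0 < delta < 1 ->
  valid_policy A ->
  (forall x : input n,
     (expected_queries p A x <= ((n - k + 1)%:R * ln (1 / (4 * delta)) / DKL p)%:E)%E) ->
  exists x : input n, (delta%:E <= Perr p A k x)%E.
Proof.
move=> /andP [hp0 hp12] hk1 hkn /andP [hd0 hd1] hA hE.
have hp1 : p < 1 by lra.
set B := (n - k + 1)%:R * ln (1 / (4 * delta)) / DKL p in hE.
have hD : 0 < DKL p.
  rewrite /DKL mulr_gt0 //; first lra.
  apply: ln_gt0; rewrite ltr_pdivlMr //; lra.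
apply: contrapT => hne.
have hlt : forall x, (Perr p A k x < delta%:E)%E.
  by move=> x; rewrite ltNge; apply/negP => h; apply: hne; exists x.
set F := fun x => fine (Perr p A k x).
have hfin : forall x, Perr p A k x = (F x)%:E.
  move=> x; rewrite /F fineK // ge0_fin_numE; last first.
    by apply: nneseries_ge0 => m _ _; rewrite lee_fin Pso_ge0.
  exact: lt_trans (hlt x) (ltey _).
have hFd : forall x, F x < delta by move=> x; rewrite -lte_fin -hfin.
have hpart : forall x N, \sum_(m < N) P_stop_out p A x m (~~ TH k x) <= F x.
  move=> x N; rewrite -lee_fin -hfin; apply: partial_le_series => m.
  exact: Pso_ge0.
pose x0 : input n := [ffun j : 'I_n => (j < k.-1)%N].
case: (@arg_maxP _ R _ x0 xpredT F isT) => xm _ hxm.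
set g := delta - F xm.
have hg : 0 < g by rewrite /g subr_gt0.
have hFg : forall x, F x <= delta - g by move=> x; rewrite /g opprB addrC subrK; exact: hxm.
have [N hN] := Rm_small hp0 hp1 hA hE x0 (divr_gt0 hg (ltr0Sn R 1)).
have hsx0 : (\sum_(j < n) x0 j = k.-1)%N.
  rewrite -(@sum_x0 n k.-1 (leq_trans (leq_pred k) hkn)).
  by apply: eq_bigr => j _; rewrite ffunE.
have hTH0 : TH k x0 = false by rewrite /TH hsx0; apply/negbTE; rewrite -ltnNge; lia.
pose Z0 := [pred j : 'I_n | ~~ x0 j].
have hcard : #|Z0| = (n - k + 1)%N.
  have h1 : (\sum_(j < n) nat_of_bool (x0 j) + \sum_(j < n) nat_of_bool (~~ x0 j) = n)%N.
    rewrite -big_split /= -[RHS]card_ord -sum1_card; apply: eq_bigr => j _.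
    by case: (x0 j).
  have h2 : #|Z0| = (\sum_(j < n) nat_of_bool (~~ x0 j))%N.
    by rewrite -sum1_card big_mkcond /=; apply: eq_bigr => j _; rewrite /Z0 inE; case: (~~ x0 j).
  rewrite h2; move: h1; rewrite hsx0; lia.
have hn0 : (0 < n)%N by apply: leq_trans hk1 hkn.
have hj0 : (n.-1 < n)%N by lia.
pose j0 := Ordinal hj0.
have hj0Z : j0 \in Z0 by rewrite inE /= ffunE /= -leqNgt; lia.
case: (@arg_minP _ R _ j0 Z0 (fun j => Nj p A x0 j N) hj0Z) => i hiZ himin.
have hsumB : #|Z0|%:R * Nj p A x0 i N <= B.
  apply: le_trans (T_le_B hp0 hp1 hA hE x0 N).
  rewrite -sumNj (bigID (fun j => j \in Z0)) /=.
  have h1 : #|Z0|%:R * Nj p A x0 i N <= \sum_(j | j \in Z0) Nj p A x0 j N.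
    have := @ler_sum _ _ _ (fun j => j \in Z0) (fun _ => Nj p A x0 i N) (fun j => Nj p A x0 j N) himin.
    move=> h; have := h (index_enum _); by rewrite sumr_const mulr_natl.
  have h2 : 0 <= \sum_(j | j \notin Z0) Nj p A x0 j N.
    by apply: sumr_ge0 => j _; apply: Nj_ge0.
  lra.
rewrite hcard in hsumB.
have hc0 : 0 < (n - k + 1)%:R :> R by rewrite ltr0n addn1.
have hNi : DKL p * Nj p A x0 i N <= ln (1 / (4 * delta)).
  have h1 : Nj p A x0 i N <= ln (1 / (4 * delta)) / DKL p.
    rewrite -(ler_pM2l hc0) mulrA; exact: hsumB.
  have := ler_wpM2l (ltW hD) h1.
  have -> : DKL p * (ln (1 / (4 * delta)) / DKL p) = ln (1 / (4 * delta)) by field; rewrite gt_eqF.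
  by [].
have hx0i : x0 i = false by move: hiZ; rewrite inE /=; case: (x0 i).
pose y : input n := [ffun j => if j == i then true else x0 j].
have hyi : y i = ~~ x0 i by rewrite ffunE eqxx hx0i.
have hyj : forall j, j != i -> y j = x0 j by move=> j hj; rewrite ffunE (negbTE hj).
have hsy : (\sum_(j < n) y j = (\sum_(j < n) x0 j).+1)%N.
  rewrite (bigD1 i) //= [in RHS](bigD1 i) //= hyi hx0i /= add1n add0n; congr S.
  by apply: eq_bigr => j hj; rewrite hyj.
have hTHy : TH k y = true by rewrite /TH hsy hsx0 (prednK hk1) leqnn.
set BC := Phi p A x0 N (fun t => expR (- Zs p x0 i t / 2)).
have hJ : expR (- (DKL p * Nj p A x0 i N) / 2) <= BC := jensen hp0 hp1 hA x0 i N.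
set e0 := expR (- (DKL p * Nj p A x0 i N) / 2) in hJ.
have he0 : 0 < e0 by apply: expR_gt0.
have hBC : 0 < BC by apply: lt_le_trans hJ.
have ha : 0 < 2 / BC by rewrite divr_gt0.
have hB := BH hp0 hp1 hA hyi hyj N false ha.
rewrite -/BC in hB.
have hEx := hpart x0 N; rewrite hTH0 /= in hEx.
have hEy := hpart y N; rewrite hTHy /= in hEy.
set Ex := \sum_(m < N) P_stop_out p A x0 m true in hB hEx.
set Ey := \sum_(m < N) P_stop_out p A y m false in hB hEy.
set RN := Rm p A x0 N in hB hN.
have h22 : 2 / (2 / BC) = BC by field; rewrite gt_eqF.
rewrite h22 in hB.
have hBC2 : BC * BC <= 2 * (Ex + Ey + RN).
  have := ler_wpM2l (ltW hBC) hB.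
  have -> : BC * (2 / BC * (Ex + Ey + RN) + BC) = 2 * (Ex + Ey + RN) + BC * BC by field; rewrite gt_eqF.
  have -> : BC * (2 * BC) = 2 * (BC * BC) by ring.
  lra.
have he02 : e0 * e0 <= BC * BC by apply: ler_pM => //; exact: ltW.
have hd4 : 4 * delta <= e0 * e0.
  rewrite /e0 -expRD.
  have -> : - (DKL p * Nj p A x0 i N) / 2 + - (DKL p * Nj p A x0 i N) / 2 = - (DKL p * Nj p A x0 i N) by field.
  have h4 : 0 < 4 * delta by rewrite mulr_gt0.
  have -> : 4 * delta = expR (- ln (1 / (4 * delta))).
    by rewrite div1r lnV ?posrE // opprK lnK // posrE.
  by rewrite ler_expR lerN2.
have := hFg x0; have := hFg y; have := hFd x0.
lra.
Qed.
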